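(* Let $n\ge2$ and let $P_n$ be the path with vertex set $\{1,\dots,n\}$ and edges $\{k,k+1\}$. If $S$ is the eigenvalue support of an edge state $e_k-e_{k+1}$ ($1\le k\le n-1$) with respect to the Laplacian of $P_n$, then $|S|\ge n/2$.
   Context: Let $L$ be the Laplacian of a graph with spectral decomposition $L=\sum_r\theta_rE_r$ ($\theta_r$ distinct eigenvalues, $E_r$ orthogonal projections onto eigenspaces). The eigenvalue support of a vector $x$ is the set of $\theta_r$ with $E_rx\neq0$. *)

(* Defs.v *)
From HB Require Import structures.
From mathcomp Require Import all_boot all_order all_algebra.
From mathcomp Require Import reals.
Set Implicit Arguments. Unset Strict Implicit. Unset Printing Implicit Defensive.
Import Order.TTheory GRing.Theory Num.Theory.
Local Open Scope ring_scope.

(* Path P_n on vertices 'I_n (vertex i here = vertex i+1 in the paper);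
   edges {k, k+1}. *)
Definition path_adj (n : nat) (i j : 'I_n) : bool :=
  (i.+1 == j :> nat) || (j.+1 == i :> nat).

Definition path_deg (n : nat) (i : 'I_n) : nat := #|[pred j | path_adj i j]|.

Definition path_laplacian (R : numDomainType) (n : nat) : 'M[R]_n :=
  \matrix_(i, j) (if i == j then (path_deg i)%:R
                  else if path_adj i j then -1 else 0).

Definition edge_state (R : numDomainType) (n : nat) (k : 'I_n) : 'rV[R]_n :=
  \row_i ((i == k :> nat)%:R - (i == k.+1 :> nat)%:R).

Definition is_eigenprojection (R : fieldType) (n : nat) (M : 'M[R]_n)
  (theta : R) (P : 'M[R]_n) : Prop :=
  [/\ P^T = P, P *m P = P & (P == eigenspace M theta)%MS].

Definition in_eigen_support (R : fieldType) (n : nat) (M : 'M[R]_n)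
  (x : 'rV[R]_n) (theta : R) : Prop :=
  eigenvalue M theta /\
  exists P : 'M[R]_n, is_eigenprojection M theta P /\ x *m P != 0.

(* Main.v *)
Require Import Defs.
From HB Require Import structures.
From mathcomp Require Import all_boot all_order all_algebra.
From mathcomp Require Import reals.
From mathcomp Require Import complex zify.
Import Order.TTheory GRing.Theory Num.Theory.
Local Open Scope ring_scope.

Lemma diag_poly (R : rcfType) n (L : 'M[R]_n.+1) : L^T = L ->
  exists s : seq R, uniq s /\ horner_mx L (\prod_(r <- s) ('X - r%:P)) = 0.
Proof.
move=> HL.
pose A := map_mx (real_complex R) L.
have herm : A \is hermsymmx.
  apply: realsym_hermsym.
    by apply/is_hermitianmxP; rewrite expr0 scale1r map_mx_id // /A map_trmx HL.
  by apply/mxOverP => i j; rewrite mxE complex_real.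
have := hermitian_normalmx herm => /orthomx_spectralP eqA.
have /mxOverP dreal := hermitian_spectral_diag_real herm.
set d := spectral_diag A in eqA dreal; set P := spectralmx A in eqA.
pose s := undup [seq complex.Re (d 0 i) | i : 'I_n.+1].
exists s; split; first exact: undup_uniq.
apply: (map_mx_inj (f := real_complex R)); rewrite map_mx0 map_horner_mx -/A.
rewrite eqA horner_mx_uconjC ?spectral_unit // horner_mx_diag.
suff -> : map_mx (horner (map_poly (real_complex R) (\prod_(r <- s) ('X - r%:P)))) d = 0.
  have -> : diag_mx (0 : 'rV[R[i]]_n.+1) = 0 by apply/matrixP=> a b; rewrite !mxE mul0rn.
  by rewrite mulmx0 mul0mx.
apply/rowP => i; rewrite !mxE.
rewrite rmorph_prod horner_prod; apply/eqP; rewrite prodf_seq_eq0.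
apply/hasP; exists (complex.Re (d 0 i)).
  by rewrite mem_undup; apply/mapP; exists i; rewrite ?mem_enum.
by rewrite rmorphB /= map_polyX map_polyC /= !hornerE /= RRe_real ?subrr.
Qed.
Section Gen.
Variable R : realFieldType.

Lemma dot_self_eq0 m (w : 'rV[R]_m) : w *m w^T = 0 -> w = 0.
Proof.
move=> /matrixP /(_ 0 0); rewrite !mxE => /eqP.
rewrite psumr_eq0; last by move=> i _; rewrite mxE -expr2 sqr_ge0.
move=> /allP H; apply/rowP => i; rewrite mxE.
have := H i (mem_index_enum _); rewrite mxE -expr2 sqrf_eq0 => /eqP ->.
by [].
Qed.

Lemma proj_exists n (V : 'M[R]_n) :
  exists P : 'M[R]_n, [/\ P^T = P, P *m P = P & (P == V)%MS].
Proof.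
have Bfree := row_base_free V; have BV := eq_row_base V.
move: (row_base V) Bfree BV => B Bfree BV.
have Gu : B *m B^T \in unitmx.
  rewrite -row_free_unit -kermx_eq0; apply/eqP/row_matrixP => i.
  rewrite row0; set u := row i _.
  have uG : u *m (B *m B^T) = 0 by rewrite /u -row_mul mulmx_ker row0.
  have uB : u *m B = 0.
    by apply: dot_self_eq0; rewrite trmx_mul mulmxA -(mulmxA u) uG mul0mx.
  by apply/eqP; rewrite -(mulmx_free_eq0 _ Bfree) uB.
exists (B^T *m invmx (B *m B^T) *m B); split.
- by rewrite !trmx_mul trmxK trmx_inv trmx_mul trmxK mulmxA.
- by rewrite !mulmxA -(mulmxA _ B) mulmxKV.
- apply/andP; split.
    by rewrite (submx_trans (submxMl _ _)) // BV.
  rewrite -BV.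
  have {1}-> : B = B *m (B^T *m invmx (B *m B^T) *m B) by rewrite !mulmxA mulmxV // mul1mx.
  exact: submxMl.
Qed.

Lemma orth_iff n m (P : 'M[R]_n) (E : 'M[R]_(m, n)) (x : 'rV[R]_n) :
  P^T = P -> (P == E)%MS -> (x *m P == 0) = (x *m E^T == 0).
Proof.
move=> Ps /andP[/submxP [W PW] /submxP [W' EW]].
apply/idP/idP => /eqP H; apply/eqP.
  by rewrite EW trmx_mul mulmxA Ps H mul0mx.
by rewrite -Ps PW trmx_mul mulmxA H mul0mx.
Qed.
End Gen.
Section Sym.
Variable R : realFieldType.
Variable n : nat.
Variable L : 'M[R]_n.+1.
Hypothesis Ls : L^T = L.

Lemma eig_horner m (W : 'M_(m, n.+1)) t p :
  W *m L = t *: W -> W *m horner_mx L p = p.[t] *: W.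
Proof.
move=> WL; elim/poly_ind: p => [|p c IH].
  by rewrite rmorph0 horner0 mulmx0 scale0r.
rewrite rmorphD rmorphM /= horner_mx_X horner_mx_C -mulmxE mulmxDr mulmxA IH.
rewrite -scalemxAl WL scalerA mul_mx_scalar !hornerE scalerDl.
by [].
Qed.

Lemma horner_sym p : (horner_mx L p)^T = horner_mx L p.
Proof.
elim/poly_ind: p => [|p c IH]; first by rewrite rmorph0 trmx0.
rewrite rmorphD rmorphM /= horner_mx_X horner_mx_C -mulmxE linearD /= trmx_mul IH Ls.
by rewrite tr_scalar_mx; congr (_ + _); rewrite mulmxE; apply: comm_mx_horner.
Qed.

Lemma zero_lemma (t : seq R) (z : 'rV[R]_n.+1) :
  (forall th, th \in t -> z *m (eigenspace L th)^T = 0) ->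
  z *m horner_mx L (\prod_(th <- t) ('X - th%:P)) = 0 -> z = 0.
Proof.
elim: t z => [|th t IH] z Hz.
  by rewrite big_nil rmorph1 mulmx1.
rewrite big_cons mulrC rmorphM /= -mulmxE mulmxA => H0.
apply: IH => [u ut|]; first by apply: Hz; rewrite inE ut orbT.
set M := horner_mx L _ in H0 *.
set u := z *m M.
have uE : (u <= eigenspace L th)%MS.
  apply/sub_kermxP; move: H0; rewrite rmorphB /= horner_mx_X horner_mx_C.
  by [].
have uL : u *m L = th *: u by apply/eigenspaceP.
have zu : z *m u^T = 0.
  have [w ->] := submxP uE.
  by rewrite trmx_mul mulmxA Hz ?mem_head // mul0mx.
apply: dot_self_eq0.
have Ms : M^T = M by rewrite /M horner_sym.
have uM : u *m M = _ := @eig_horner _ _ _ (\prod_(j <- t) ('X - j%:P)) uL.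
by rewrite {1}/u -mulmxA -{1}Ms -trmx_mul uM linearZ /= -scalemxAr zu scaler0.
Qed.
End Sym.
Section Kry.
Variable R : fieldType.
Variable n : nat.
Variable L : 'M[R]_n.+1.

Lemma krylov_bound (x : 'rV[R]_n.+1) (q : {poly R}) J (c : 'I_J -> 'I_n.+1) :
  q != 0 -> x *m horner_mx L q = 0 ->
  (forall i j : 'I_J, (i < j)%N -> (x *m L^+i) 0 (c j) = 0) ->
  (forall i : 'I_J, (x *m L^+i) 0 (c i) != 0) ->
  (J < size q)%N.
Proof.
move=> q0 xq Htri Hdiag.
pose m := (size q).-1.
pose Kr := \matrix_(i < m) (x *m L ^+ i).
have Kin : forall i, (x *m L^+i <= Kr)%MS.
  move=> i.
  have -> : x *m L^+i = x *m horner_mx L (modp ('X^i : {poly R}) q).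
    have -> : L^+i = horner_mx L ('X^i : {poly R}) by rewrite rmorphXn /= horner_mx_X.
    rewrite {1}(divp_eq 'X^i q) rmorphD rmorphM /= (comm_horner_mx2 L) -mulmxE.
    by rewrite mulmxDr mulmxA xq mul0mx add0r.
  have sr : (size (modp ('X^i : {poly R}) q) <= m)%N.
    by rewrite /m -ltnS prednK ?ltn_modp // lt0n size_poly_eq0.
  rewrite -(coefK (modp ('X^i : {poly R}) q)) poly_def linear_sum mulmx_sumr /=.
  apply: summx_sub => j _; rewrite linearZ /= -scalemxAr rmorphXn /= horner_mx_X.
  apply: scalemx_sub.
  have jm : (j < m)%N by apply: leq_trans sr.
  by rewrite -(rowK (fun i : 'I_m => x *m L ^+ i) (Ordinal jm)) row_sub.
pose K2 := \matrix_(i < J) (x *m L ^+ i).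
have K2K : (K2 <= Kr)%MS by apply/row_subP => i; rewrite rowK Kin.
pose Sel := \matrix_(a < n.+1, j < J) ((a == c j)%:R : R).
have Tij : forall i j, (K2 *m Sel) i j = (x *m L^+i) 0 (c j).
  move=> i j; rewrite mxE (bigD1 (c j)) //= big1 ?addr0.
    by rewrite [Sel _ _]mxE eqxx mulr1 [K2 _ _]mxE.
  by move=> a /negPf ac; rewrite [Sel _ _]mxE ac mulr0.
have T_unit : K2 *m Sel \in unitmx.
  rewrite unitmxE det_trig.
    by rewrite unitfE; apply/prodf_neq0 => i _; rewrite Tij.
  by apply/is_trig_mxP => i j ij; rewrite Tij Htri.
have : (J <= m)%N.
  rewrite -{1}(mxrank_unit T_unit).
  apply: leq_trans (mxrankM_maxl _ _) _.
  apply: leq_trans (mxrankS K2K) _.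
  exact: rank_leq_row.
by rewrite /m -ltnS prednK // lt0n size_poly_eq0.
Qed.
End Kry.
Section Path.
Variable R : realType.
Variable N : nat.
Local Notation L := (path_laplacian R N).

Lemma L_sym : L^T = L.
Proof.
apply/matrixP => i j; rewrite !mxE eq_sym /path_adj orbC.
by case: eqP => // ->.
Qed.

Lemma L_off (a b : 'I_N) : ((b.+1 < a)%N || (a.+1 < b)%N) -> L b a = 0.
Proof.
move=> H; rewrite mxE /path_adj.
have -> : (b == a) = false by apply/eqP => ba; subst; move: H; lia.
have -> : ((b.+1 == a :> nat) || (a.+1 == b :> nat)) = false.
  by apply/negbTE; move: H; lia.
by [].
Qed.

Lemma L_adj (a b : 'I_N) : ((b.+1 == a :> nat) || (a.+1 == b :> nat)) -> L b a = -1.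
Proof.
move=> H; rewrite mxE /path_adj H.
have -> : (b == a) = false by apply/eqP => ba; subst; move: H; lia.
by [].
Qed.

Variable k : 'I_N.
Local Notation x := (edge_state R k).

Lemma right_supp i : forall a : 'I_N,
  ((k.+1 + i < a)%N -> (x *m L^+i) 0 a = 0) /\
  ((a == k.+1 + i :> nat) -> (x *m L^+i) 0 a = (-1)^+i.+1).
Proof.
elim: i => [|i IH] a.
  rewrite expr0 mulmx1 !mxE; split => H.
    have -> : (a == k :> nat) = false by apply/negbTE; move: H; lia.
    have -> : (a == k.+1 :> nat) = false by apply/negbTE; move: H; lia.
    by rewrite subrr.
  have -> : (a == k :> nat) = false by apply/negbTE; move: H; lia.
  have -> : (a == k.+1 :> nat) by move: H; lia.
  by rewrite sub0r expr1.
rewrite exprSr mulmxA; split => H.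
  rewrite mxE big1 // => b _.
  have [bi|bi] := ltnP (k.+1 + i) b; first by rewrite (proj1 (IH b) bi) mul0r.
  by rewrite L_off ?mulr0 //; apply/orP; left; move: H bi; lia.
have b0N : (a.-1 < N)%N by move: (ltn_ord a); lia.
pose b0 := Ordinal b0N.
rewrite mxE (bigD1 b0) //= big1 ?addr0.
  rewrite (proj2 (IH b0)) /=; last by move: H; lia.
  by rewrite L_adj ?exprS ?mulrN1 ?mulN1r //=; move: H; lia.
move=> b bb0.
have [bi|bi] := ltnP (k.+1 + i) b; first by rewrite (proj1 (IH b) bi) mul0r.
rewrite L_off ?mulr0 //; apply/orP; left.
have : (val b != val b0) by [].
by rewrite /=; move: H bi; lia.
Qed.

Lemma left_supp i : forall a : 'I_N,
  ((a + i < k)%N -> (x *m L^+i) 0 a = 0) /\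
  (((a + i)%N == k :> nat) -> (x *m L^+i) 0 a = (-1)^+i).
Proof.
elim: i => [|i IH] a.
  rewrite expr0 mulmx1 !mxE; split => H.
    have -> : (a == k :> nat) = false by apply/negbTE; move: H; lia.
    have -> : (a == k.+1 :> nat) = false by apply/negbTE; move: H; lia.
    by rewrite subrr.
  have -> : (a == k.+1 :> nat) = false by apply/negbTE; move: H; lia.
  have -> : (a == k :> nat) by move: H; lia.
  by rewrite subr0 expr0.
rewrite exprSr mulmxA; split => H.
  rewrite mxE big1 // => b _.
  have [bi|bi] := ltnP (b + i) k; first by rewrite (proj1 (IH b) bi) mul0r.
  by rewrite L_off ?mulr0 //; apply/orP; right; move: H bi; lia.
have b0N : (a.+1 < N)%N by move: (ltn_ord k) H; lia.
pose b0 := Ordinal b0N.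
rewrite mxE (bigD1 b0) //= big1 ?addr0.
  rewrite (proj2 (IH b0)) /=; last by move: H; lia.
  by rewrite L_adj ?exprS ?mulrN1 ?mulN1r //=; lia.
move=> b bb0.
have [bi|bi] := ltnP (b + i) k; first by rewrite (proj1 (IH b) bi) mul0r.
rewrite L_off ?mulr0 //; apply/orP; right.
have : (val b != val b0) by [].
by rewrite /=; move: H bi; lia.
Qed.
End Path.

Theorem mainTheorem17 (R : realType) (n : nat) (k : 'I_n) :
  (2 <= n)%N -> (k.+1 < n)%N ->
  exists S : seq R,
    [/\ uniq S,
        (forall theta : R,
           in_eigen_support (path_laplacian R n) (edge_state R k) theta
           <-> theta \in S)
      & (n <= 2 * size S)%N].
Proof.
case: n k => [|n] k n2 kn; first by move: (ltn_ord k).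
set L := path_laplacian R n.+1; set x := edge_state R k.
have Ls : L^T = L := L_sym R n.+1.
have [s [us qL]] := @diag_poly R _ _ Ls.
pose pb th := eigenvalue L th && (x *m (eigenspace L th)^T != 0).
have char : forall th, in_eigen_support L x th <-> pb th.
  move=> th; split.
    case=> ev [P [[Ps PP PE] xP]].
    by rewrite /pb ev /= -(@orth_iff _ _ _ _ _ x Ps PE).
  move=> /andP[ev xE]; split => //.
  have [P [Ps PP PE]] := @proj_exists _ _ (eigenspace L th).
  by exists P; split; [split | rewrite (@orth_iff _ _ _ _ _ x Ps PE)].
have pb_s : forall th, pb th -> th \in s.
  move=> th /andP[/eigenvalueP [v vL v0] _].
  have := @eig_horner _ _ L _ _ _ (\prod_(r <- s) ('X - r%:P)) vL.
  rewrite qL mulmx0 => /esym/eqP; rewrite scaler_eq0 (negbTE v0) orbF.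
  rewrite horner_prod prodf_seq_eq0 => /hasP [r rs].
  by rewrite hornerXsubC subr_eq0 => /eqP ->.
exists [seq th <- s | pb th]; split.
- exact: filter_uniq.
- move=> th; rewrite char mem_filter; split => [H|/andP[]//].
  by rewrite H pb_s.
set S := [seq th <- s | pb th].
set qS := \prod_(th <- S) ('X - th%:P).
have xS : x *m horner_mx L qS = 0.
  apply: (@zero_lemma _ _ L Ls [seq th <- s | ~~ pb th]).
    move=> th; rewrite mem_filter => /andP[npb _].
    set E := eigenspace L th.
    have xE : x *m E^T = 0.
      case: (boolP (eigenvalue L th)) => ev.
        by move: npb; rewrite /pb ev /= negbK => /eqP.
      by move: ev; rewrite /eigenvalue -/E negbK => /eqP ->; rewrite trmx0 mulmx0.
    have EL : E *m L = th *: E by apply/eigenspaceP.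
    rewrite -mulmxA -{1}(@horner_sym _ _ L Ls qS) -trmx_mul (@eig_horner _ _ L _ _ _ qS EL).
    by rewrite linearZ /= -scalemxAr xE scaler0.
  rewrite -mulmxA mulmxE -rmorphM /= /qS !big_filter.
  have -> : \prod_(th <- s | pb th) ('X - th%:P) * \prod_(th <- s | ~~ pb th) ('X - th%:P)
    = \prod_(th <- s) ('X - th%:P) :> {poly R} by rewrite [RHS](bigID pb).
  by rewrite qL mulmx0.
have qS0 : qS != 0 by apply: monic_neq0; apply: monic_prod_XsubC.
have szq : size qS = (size S).+1 by rewrite size_prod_XsubC.
case: (leqP n.+1 (2 * k.+1)) => hk.
  have cP : forall j : 'I_k.+1, (k - j < n.+1)%N.
    by move=> j; move: (ltn_ord k); lia.
  have := @krylov_bound _ _ L x qS _ (fun j : 'I_k.+1 => Ordinal (cP j)) qS0 xS.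
  rewrite szq ltnS => H.
  suff HH : (k.+1 <= size S)%N by apply: (leq_trans hk); rewrite leq_mul2l HH orbT.
  apply: H.
    move=> i j ij; apply: (proj1 (left_supp _ _ _ _ _)) => /=.
    by move: (ltn_ord j) ij; lia.
  move=> i; rewrite (proj2 (left_supp _ _ _ _ _)) /=.
    by rewrite expf_neq0 // oppr_eq0 oner_eq0.
  by move: (ltn_ord i); lia.
have cP : forall j : 'I_(n - k), (k.+1 + j < n.+1)%N.
  by move=> j; move: (ltn_ord j); lia.
have := @krylov_bound _ _ L x qS _ (fun j : 'I_(n - k) => Ordinal (cP j)) qS0 xS.
rewrite szq ltnS => H.
suff HH : (n - k <= size S)%N.
  by apply: (@leq_trans (2 * (n - k))); [lia | rewrite leq_mul2l HH orbT].
apply: H.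
  move=> i j ij; apply: (proj1 (right_supp _ _ _ _ _)) => /=.
  by move: ij; lia.
move=> i; rewrite (proj2 (right_supp _ _ _ _ _)) /=.
  by rewrite expf_neq0 // oppr_eq0 oner_eq0.
by [].
Qed.
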